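(* Let $\mathfrak h=\mathfrak{su}(p',q')$ with $0<p'<q'$, with restricted root data as in the context, and let $\mathfrak h^0\subset\mathfrak h$ be a subalgebra invariant under $\mathrm{ad}\,\mathfrak b_H$. Then: (1) if $\mathfrak a_H\subset\mathfrak h^0$, then $\mathfrak b_H\subset\mathfrak h^0$; (2) for $i',j'$ (possibly equal), if $\mathfrak h_{-\alpha_{i'}-\alpha_{j'}}\cap\mathfrak h^0\ne0$, then $\mathfrak h_{-\alpha_{i'}}\subset\mathfrak h^0$; (3) if $p'\ge2$, $i'\ne j'$, $\mathfrak h_{-\alpha_{i'}}\subset\mathfrak h^0$ and $\mathfrak h_{-\alpha_{j'}}\cap\mathfrak h^0\ne0$, then $\mathfrak h_{-\alpha_{j'}}\subset\mathfrak h^0$.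
   Context: $\mathfrak a_H$ is a maximal $\mathbf R$-split abelian subalgebra of $\mathfrak h$; the restricted root system is $BC_{p'}$, with short roots $\alpha_1,\dots,\alpha_{p'}\in\mathfrak a_H^*$ chosen so that the positive roots are $\{\alpha_{k'}\}\cup\{\alpha_{i'}-\alpha_{j'}:i'<j'\}\cup\{\alpha_{i'}+\alpha_{j'}\}$ (the last including $2\alpha_{i'}$). Root spaces: $\dim\mathfrak h_{\pm\alpha_{k'}}=2(q'-p')$, $\dim\mathfrak h_{\pm\alpha_{i'}\pm\alpha_{j'}}=2$ for $i'\ne j'$, $\dim\mathfrak h_{\pm2\alpha_{i'}}=1$. $\mathfrak b_H=\mathfrak a_H\oplus\bigoplus_{\alpha>0}\mathfrak h_\alpha$ (Borel subalgebra; the compact part of the centralizer of $\mathfrak a_H$ is omitted from $\mathfrak b_H$ here). *)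

(* Defs.v *)
From mathcomp Require Import all_boot all_order all_algebra.
From mathcomp Require Import complex.
From mathcomp Require Import reals.
Set Implicit Arguments. Unset Strict Implicit. Unset Printing Implicit Defensive.
Import Order.TTheory GRing.Theory Num.Theory.
Local Open Scope ring_scope.

Section SU.
Variables (R : realType) (p q : nat).

(* size of the matrices: p + (q - p) + p  (= p + q when p <= q) *)
Definition Nsz : nat := (p + (q - p) + p)%N.

Local Notation C := (complex R).
Local Notation M := 'M[C]_Nsz.

(* Hermitian form of signature (p,q): blocks of sizes p, q-p, p,
   J = [[0,0,I],[0,-I,0],[I,0,0]] *)
Definition Jform : M :=
  \matrix_(i < Nsz, j < Nsz)
    if ((i < p)%N && (j == (i + q)%N :> nat)) || ((j < p)%N && (i == (j + q)%N :> nat))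
    then 1
    else if ((p <= i)%N && (i < q)%N && (i == j :> nat)) then -1 else 0.

Definition adjmx (X : M) : M := (map_mx (@conjc R) X)^T.

Definition lie (X Y : M) : M := X *m Y - Y *m X.

Definition in_h (X : M) : Prop := adjmx X *m Jform + Jform *m X = 0 /\ \tr X = 0.

Definition aH (t : nat -> R) : M :=
  \matrix_(i < Nsz, j < Nsz)
    if i == j then
      (if (i < p)%N then real_complex R (t i)
       else if (q <= i)%N then real_complex R (- t (i - q)%N) else 0)
    else 0.

Definition in_aH (X : M) : Prop := exists t : nat -> R, X = aH t.

(* restricted root space for the functional lam on a_H (lam t = lam(aH t)) *)
Definition rootsp (lam : (nat -> R) -> R) (X : M) : Prop :=
  in_h X /\ forall t, lie (aH t) X = real_complex R (lam t) *: X.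

Definition alpha (i : nat) : (nat -> R) -> R := fun t => t i.

(* b_H = a_H + sum of positive root spaces; positive roots:
   alpha_k, alpha_i - alpha_j (i<j), alpha_i + alpha_j (i<=j, incl. 2 alpha_i) *)
Definition in_bH (X : M) : Prop :=
  exists (t : nat -> R) (Y1 : 'I_p -> M) (Y2 Y3 : 'I_p -> 'I_p -> M),
    (forall k : 'I_p, rootsp (alpha k) (Y1 k)) /\
    (forall i j : 'I_p, (i < j)%N -> rootsp (fun s => alpha i s - alpha j s) (Y2 i j)) /\
    (forall i j : 'I_p, (i <= j)%N -> rootsp (fun s => alpha i s + alpha j s) (Y3 i j)) /\
    X = aH t + \sum_(k < p) Y1 k
          + \sum_(i < p) \sum_(j < p | (i < j)%N) Y2 i j
          + \sum_(i < p) \sum_(j < p | (i <= j)%N) Y3 i j.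

Definition is_subalg (h0 : M -> Prop) : Prop :=
  (forall X, h0 X -> in_h X) /\ h0 0 /\
  (forall X Y, h0 X -> h0 Y -> h0 (X + Y)) /\
  (forall (r : R) X, h0 X -> h0 (real_complex R r *: X)) /\
  (forall X Y, h0 X -> h0 Y -> h0 (lie X Y)).

Definition adb_invariant (h0 : M -> Prop) : Prop :=
  forall Y X, in_bH Y -> h0 X -> h0 (lie Y X).

End SU.

(* Main.v *)
Require Import Defs.
From mathcomp Require Import all_boot all_order all_algebra.
From mathcomp Require Import complex.
From mathcomp Require Import reals.
From mathcomp Require Import zify ring lra.
Import GRing.Theory Num.Theory.
Local Open Scope ring_scope.

Module Helpers.
Set Implicit Arguments. Unset Strict Implicit. Unset Printing Implicit Defensive.
Local Open Scope complex_scope.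

Ltac crush := repeat (case: ifP => ?); try (exfalso; lia); try done.
Ltac reg a p q := case: (ltnP a p) => ?; [|case: (leqP q a) => ?].

Section Work.
Variables (R : realType) (p q : nat).
Hypothesis hpq : (p < q)%N.
Local Notation C := (complex R).
Local Notation N := (Nsz p q).
Local Notation M := 'M[C]_N.

Lemma ltN (a : 'I_N) : (a < p + q)%N.
Proof. case: a => a /=; rewrite /Nsz; lia. Qed.

Definition signat (n : nat) : nat :=
  if (n < p)%N then (n + q)%N else if (q <= n)%N then (n - q)%N else n.

Lemma signat_lt (a : 'I_N) : (signat a < N)%N.
Proof. case: a => a /=; rewrite /signat /Nsz => h; crush; lia. Qed.

Definition sigo (a : 'I_N) : 'I_N := Ordinal (signat_lt a).
Definition sgn (a : 'I_N) : C := if ((p <= a) && (a < q))%N then -1 else 1.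

Lemma sigK : involutive sigo.
Proof. move=> a; apply: ord_inj => /=; have := ltN a; rewrite /signat.
case: a => a /= h; reg a p q; crush; lia. Qed.

Lemma sgn_sig a : sgn (sigo a) = sgn a.
Proof. have := ltN a; rewrite /sgn /= /signat; case: a => a /= h hN. reg a p q; crush. Qed.

Lemma J_entry (a b : 'I_N) : Jform R p q a b = if sigo a == b then sgn a else 0.
Proof.
have := ltN a; have := ltN b; rewrite mxE /sgn -val_eqE /= /signat.
case: a => a /=; case: b => b /= _ _ hb ha.
reg a p q; crush.
Qed.

Lemma sum1 (F : 'I_N -> C) c0 : (forall c, c != c0 -> F c = 0) -> \sum_c F c = F c0.
Proof. by move=> h; rewrite (bigD1 c0) //= big1 ?addr0 // => c /h. Qed.

Lemma adjE (X : M) a b : adjmx X a b = (X b a)^*.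
Proof. by rewrite /adjmx !mxE. Qed.

Lemma adjJ (X : M) a b : (adjmx X *m Jform R p q) a b = (X (sigo b) a)^* * sgn b.
Proof.
rewrite mxE (sum1 (c0 := sigo b)) ?adjE ?J_entry ?sigK ?eqxx ?sgn_sig //.
by move=> c hc; rewrite J_entry; case: eqP => [E|]; [rewrite -E sigK eqxx in hc|rewrite mulr0].
Qed.

Lemma Jmul (X : M) a b : (Jform R p q *m X) a b = sgn a * X (sigo a) b.
Proof.
rewrite mxE (sum1 (c0 := sigo a)) ?J_entry ?eqxx //.
by move=> c hc; rewrite J_entry eq_sym (negbTE hc) mul0r.
Qed.

Lemma inh_entry (X : M) : in_h X -> forall a b, (X (sigo b) a)^* * sgn b + sgn a * X (sigo a) b = 0.
Proof. rewrite /in_h => -[/matrixP h _] a b; rewrite -adjJ -Jmul; move: (h a b); by rewrite !mxE. Qed.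

Lemma inh_intro (X : M) : (forall a b, (X (sigo b) a)^* * sgn b + sgn a * X (sigo a) b = 0) ->
  (forall a, X a a = 0) -> in_h X.
Proof.
move=> h hd; split; last by rewrite /mxtrace big1.
by apply/matrixP => a b; rewrite mxE [RHS]mxE adjJ Jmul h.
Qed.

Definition dd (t : nat -> R) (a : nat) : R :=
  if (a < p)%N then t a else if (q <= a)%N then - t (a - q)%N else 0.

Lemma aH_entry t (a b : 'I_N) : aH p q t a b = if a == b then (dd t a)%:C else 0.
Proof. rewrite mxE /dd; case: eqP => // _; case: ifP => // _; case: ifP => // _. Qed.

Lemma lie_aH t (X : M) a b : lie (aH p q t) X a b = (dd t a - dd t b)%:C * X a b.
Proof.
rewrite !mxE (sum1 (c0 := a)); last by move=> c hc; rewrite aH_entry eq_sym (negbTE hc) mul0r.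
rewrite (sum1 (c0 := b)); last by move=> c hc; rewrite aH_entry (negbTE hc) mulr0.
by rewrite !aH_entry !eqxx rmorphB /= mulrBl [X a b * _]mulrC.
Qed.

Lemma root_entry lam (X : M) : rootsp lam X -> forall t a b, X a b != 0 -> dd t a - dd t b = lam t.
Proof.
case=> _ h t a b hX; move/matrixP: (h t) => /(_ a b).
rewrite lie_aH mxE => /eqP; rewrite -subr_eq0 -mulrBl mulf_eq0 (negbTE hX) orbF subr_eq0.
by move/eqP/complexI.
Qed.

Lemma root_intro lam (X : M) : in_h X -> (forall t a b, X a b != 0 -> dd t a - dd t b = lam t) -> rootsp lam X.
Proof.
move=> hh h; split=> // t; apply/matrixP => a b; rewrite lie_aH mxE.
by have [->|/h ->] := eqVneq (X a b) 0; rewrite ?mulr0.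
Qed.

Definition tone : nat -> R := fun _ => 1.
Definition del (k : nat) : nat -> R := fun n => if n == k then 1 else 0.


Ltac fin := repeat (case: ifP => ?); move=> *; try (exfalso; lra); try lia.

Lemma supp_mi (i : 'I_p) (X : M) a b : rootsp (fun t => - alpha i t) X -> X a b != 0 ->
  (((p <= a < q) && (b == i :> nat)) || ((a == q + i :> nat) && (p <= b < q)))%N.
Proof.
move=> hX hab; move: (root_entry hX tone hab) (root_entry hX (del i) hab).
rewrite /alpha /dd /tone /del; have := ltN a; have := ltN b; have := ltn_ord i.
move=> hi hb ha.
reg (nat_of_ord a) p q; reg (nat_of_ord b) p q; move=> E1; try (exfalso; lra).
all: fin.
Qed.

Lemma supp_mij (i j : 'I_p) (X : M) a b : rootsp (fun t => - alpha i t - alpha j t) X -> X a b != 0 ->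
  (((a == q + i :> nat) && (b == j :> nat)) || ((a == q + j :> nat) && (b == i :> nat)))%N.
Proof.
move=> hX hab; move: (root_entry hX tone hab) (root_entry hX (del i) hab) (root_entry hX (del j) hab).
rewrite /alpha /dd /tone /del; have := ltN a; have := ltN b; have := ltn_ord i; have := ltn_ord j.
move=> hj hi hb ha.
reg (nat_of_ord a) p q; reg (nat_of_ord b) p q; move=> E1; try (exfalso; lra).
rewrite !eqxx; fin.
Qed.

End Work.

Section Work2.
Variables (R : realType) (p q : nat).
Hypothesis hpq : (p < q)%N.
Local Notation C := (complex R).
Local Notation N := (Nsz p q).
Local Notation M := 'M[C]_N.
Local Notation sigo := (sigo hpq).
Local Notation sgn := (sgn R (p:=p) (q:=q)).

Lemma conj_sgn a : (sgn a)^* = sgn a.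
Proof. by rewrite /sgn; case: ifP => _; rewrite ?rmorphN rmorph1. Qed.

Lemma inh_check (Y : M) (S : 'I_N -> 'I_N -> bool) :
  (forall a b, Y a b != 0 -> S a b) ->
  (forall c a, S c a -> (Y c a)^* * sgn c + sgn a * Y (sigo a) (sigo c) = 0) ->
  (forall a, Y a a = 0) -> in_h Y.
Proof.
move=> hS hc hd; apply: (@inh_intro R p q hpq Y) => // a b.
case: (boolP (S (sigo b) a)) => [h|h1].
  by have := hc _ _ h; rewrite sigK sgn_sig.
case: (boolP (S (sigo a) b)) => [h|h2].
  have := hc _ _ h; rewrite sigK sgn_sig => /eqP.
  rewrite -conjc_eq0 rmorphD !rmorphM /= conjcK !conj_sgn => /eqP <-.
  by rewrite addrC mulrC [_ * sgn b]mulrC.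
have -> : Y (sigo b) a = 0 by apply/eqP; apply: contraNT h1 => /hS.
have -> : Y (sigo a) b = 0 by apply/eqP; apply: contraNT h2 => /hS.
by rewrite mulr0 addr0; apply/eqP; rewrite mulf_eq0 conjc_eq0 eqxx.
Qed.

Lemma root_lie lam mu nu (X Y : M) : rootsp lam X -> rootsp mu Y -> in_h (lie X Y) ->
  (forall t, nu t = lam t + mu t) -> rootsp nu (lie X Y).
Proof.
move=> hX hY hZ hnu; apply: root_intro => // t a b hab; rewrite hnu.
have [c hc] : exists c, ((X a c != 0) && (Y c b != 0)) || ((Y a c != 0) && (X c b != 0)).
  apply/existsP; apply: contraNT hab; rewrite negb_exists => /forallP hall.
  rewrite !mxE big1 ?big1 ?subrr // => c _; have := hall c; rewrite negb_or !negb_and.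
    by case/andP=> _; case/orP => /negPn/eqP ->; rewrite ?mul0r ?mulr0.
  by case/andP=> /orP[] /negPn/eqP -> _; rewrite ?mul0r ?mulr0.
case/orP: hc => /andP[h1 h2].
  by rewrite -(root_entry hX t h1) -(root_entry hY t h2); lra.
by rewrite -(root_entry hX t h2) -(root_entry hY t h1); lra.
Qed.

Lemma adj0 : adjmx (0 : M) = 0.
Proof. by apply/matrixP=> a b; rewrite adjE !mxE; apply/eqP; rewrite conjc_eq0. Qed.

Lemma root0 lam : rootsp lam (0 : M).
Proof.
rewrite /rootsp /in_h adj0; split; first by split; rewrite ?mulmx0 ?mul0mx ?addr0 ?mxtrace0.
by move=> t; rewrite /lie mulmx0 mul0mx subrr scaler0.
Qed.

Lemma aH0 : aH p q (fun _ => (0 : R)) = 0.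
Proof. by apply/matrixP => a b; rewrite !mxE; case: eqP => // _; rewrite oppr0; case: ifP => //; case: ifP. Qed.

Lemma in_bH_alpha (k0 : 'I_p) (Y : M) : rootsp (alpha k0) Y -> in_bH Y.
Proof.
move=> hY; exists (fun _ => 0), (fun k => if k == k0 then Y else 0), (fun _ _ => 0), (fun _ _ => 0).
split; first by move=> k; case: eqP => [->|]; [|move=> _; apply: root0].
split; first by move=> *; apply: root0.
split; first by move=> *; apply: root0.
rewrite aH0 add0r -big_mkcond big_pred1_eq.
rewrite [X in _ + X + _](eq_bigr (fun _ => 0)) => [|i _]; last exact: big1_eq.
rewrite [X in _ + X](eq_bigr (fun _ => 0)) => [|i _]; last exact: big1_eq.
by rewrite !big1_eq !addr0.
Qed.

Lemma in_bH_sub (i0 j0 : 'I_p) (Y : M) : (i0 < j0)%N ->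
  rootsp (fun s => alpha i0 s - alpha j0 s) Y -> in_bH Y.
Proof.
move=> hij hY; exists (fun _ => 0), (fun _ => 0), (fun i j => if (i == i0) && (j == j0) then Y else 0), (fun _ _ => 0).
split; first by move=> *; apply: root0.
split; first by move=> i j _; case: eqP => [->|]; case: eqP => [->|] //= *; apply: root0.
split; first by move=> *; apply: root0.
rewrite aH0 add0r big1_eq add0r [X in _ + X](eq_bigr (fun _ => 0)) => [|i _]; last exact: big1_eq.
rewrite big1_eq addr0 (bigD1 i0) //= [X in _ + X]big1 ?addr0 => [|i hi]; last by rewrite big1 // => j _; rewrite (negbTE hi).
rewrite eqxx /= (bigD1 j0) //= eqxx big1 ?addr0 // => j /andP[_ hj]; by rewrite (negbTE hj).
Qed.

Lemma in_bH_add (i0 j0 : 'I_p) (Y : M) : (i0 <= j0)%N ->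
  rootsp (fun s => alpha i0 s + alpha j0 s) Y -> in_bH Y.
Proof.
move=> hij hY; exists (fun _ => 0), (fun _ => 0), (fun _ _ => 0), (fun i j => if (i == i0) && (j == j0) then Y else 0).
split; first by move=> *; apply: root0.
split; first by move=> *; apply: root0.
split; first by move=> i j _; case: eqP => [->|]; case: eqP => [->|] //= *; apply: root0.
rewrite aH0 add0r big1_eq add0r [X in X + _](eq_bigr (fun _ => 0)) => [|i _]; last exact: big1_eq.
rewrite big1_eq add0r (bigD1 i0) //= [X in _ + X]big1 ?addr0 => [|i hi]; last by rewrite big1 // => j _; rewrite (negbTE hi).
rewrite eqxx /= (bigD1 j0) //= eqxx big1 ?addr0 // => j /andP[_ hj]; by rewrite (negbTE hj).
Qed.

Lemma lie_anti (X Y : M) : lie X Y = - lie Y X.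
Proof. by rewrite /lie opprB. Qed.

Lemma root_h0 (h0 : M -> Prop) lam t0 (Y : M) : is_subalg h0 -> adb_invariant h0 ->
  (forall X, in_aH X -> h0 X) -> rootsp lam Y -> lam t0 != 0 -> in_bH Y -> h0 Y.
Proof.
move=> [_ [_ [_ [hsc _]]]] hadb haH hY hl hb.
have H := hadb _ _ hb (haH _ (ex_intro _ t0 erefl)).
rewrite lie_anti hY.2 in H.
have := hsc (- (lam t0)^-1) _ H.
by rewrite scalerN scalerA -rmorphM /= mulNr mulVf // rmorphN rmorph1 scaleN1r opprK.
Qed.

Lemma part1 (h0 : M -> Prop) : is_subalg h0 -> adb_invariant h0 ->
  (forall X, in_aH X -> h0 X) -> forall X, in_bH X -> h0 X.
Proof.
move=> hs hadb haH X [t [Y1 [Y2 [Y3 [h1 [h2 [h3 ->]]]]]]].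
have := hs; rewrite /is_subalg => -[_ [h00 [hadd _]]].
apply: (hadd); [apply: (hadd); [apply: (hadd)|]|].
- exact: (haH _ (ex_intro _ t erefl)).
- apply: (big_ind h0) => // k _.
  apply: (root_h0 (t0 := del R k) hs hadb haH (h1 k)); last exact: (in_bH_alpha (h1 k)).
  by rewrite /alpha /del eqxx oner_neq0.
- apply: (big_ind h0) => // i _; apply: (big_ind h0) => // j hij.
  apply: (root_h0 (t0 := del R i) hs hadb haH (h2 i j hij)); last exact: (in_bH_sub hij (h2 i j hij)).
  rewrite /alpha /del eqxx; case: ifP => [/eqP ji|_]; first by rewrite ji ltnn in hij.
  by rewrite subr0 oner_neq0.
- apply: (big_ind h0) => // i _; apply: (big_ind h0) => // j hij.
  apply: (root_h0 (t0 := del R i) hs hadb haH (h3 i j hij)); last exact: (in_bH_add hij (h3 i j hij)).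
  by rewrite /alpha /del eqxx; case: ifP => _; apply/eqP; lra.
Qed.

End Work2.

Section Work3.
Variables (R : realType) (p q : nat).
Hypothesis hpq : (p < q)%N.
Local Notation C := (complex R).
Local Notation N := (Nsz p q).
Local Notation M := 'M[C]_N.
Local Notation sigo := (sigo hpq).
Local Notation sgn := (sgn R (p:=p) (q:=q)).
Local Notation dd := (@dd R p q).

Lemma conjN' (x : C) : (- x)^* = - x^*.
Proof. exact: rmorphN. Qed.
Lemma conjM' (x y : C) : (x * y)^* = x^* * y^*.
Proof. exact: rmorphM. Qed.
Lemma conjV' (x : C) : (x^-1)^* = (x^*)^-1.
Proof. exact: conjc_inv. Qed.
Lemma conjK' (x : C) : (x^*)^* = x.
Proof. exact: conjcK. Qed.

Lemma iA_lt (i : 'I_p) : (i < N)%N. Proof. have := ltn_ord i; rewrite /Nsz; lia. Qed.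
Lemma iC_lt (i : 'I_p) : (q + i < N)%N. Proof. have := ltn_ord i; rewrite /Nsz; lia. Qed.
Definition iA (i : 'I_p) : 'I_N := Ordinal (iA_lt i).
Definition iC (i : 'I_p) : 'I_N := Ordinal (iC_lt i).

Lemma sig_iA i : sigo (iA i) = iC i.
Proof. by apply: ord_inj; rewrite /= /signat ltn_ord addnC. Qed.
Lemma sig_iC i : sigo (iC i) = iA i.
Proof. by rewrite -sig_iA sigK. Qed.
Lemma sgn_iA i : sgn (iA i) = 1.
Proof. by rewrite /sgn /= leqNgt ltn_ord. Qed.
Lemma sgn_iC i : sgn (iC i) = 1.
Proof. rewrite /sgn /=; case: ifP => //; lia. Qed.
Lemma sig_B (a : 'I_N) : (p <= a < q)%N -> sigo a = a.
Proof. move=> h; apply: ord_inj; rewrite /= /signat; case: ifP; [lia|]; case: ifP; lia. Qed.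
Lemma sgn_B (a : 'I_N) : (p <= a < q)%N -> sgn a = -1.
Proof. by rewrite /sgn => ->. Qed.

Lemma dd_A t (a : nat) : (a < p)%N -> dd t a = t a.
Proof. by rewrite /dd => ->. Qed.
Lemma dd_B t (a : nat) : (p <= a < q)%N -> dd t a = 0.
Proof. move=> h; rewrite /dd; case: ifP => ?; [exfalso; lia|]; case: ifP => ? //; exfalso; lia. Qed.
Lemma dd_C t (a : nat) : (q <= a)%N -> dd t a = - t (a - q)%N.
Proof. move=> h; rewrite /dd; case: ifP => ?; [exfalso; lia|]; case: ifP => ? //; exfalso; lia. Qed.

Lemma mat_neq0 (X : M) : X != 0 -> exists a b, X a b != 0.
Proof.
move=> hX; have : [exists a, exists b, X a b != 0].
  apply: contraNT hX => /existsPn h; apply/eqP/matrixP => a b; rewrite mxE; apply/eqP.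
  by have /existsPn/(_ b) := h a; rewrite negbK.
by case/existsP => a /existsP [b hb]; exists a, b.
Qed.

Lemma ordE (a : 'I_N) (n : nat) (H : (n < N)%N) : (a == n :> nat) -> a = Ordinal H.
Proof. by move/eqP=> h; apply: ord_inj. Qed.

Lemma rel_mij (i j : 'I_p) (X0 : M) : rootsp (fun t => - alpha i t - alpha j t) X0 ->
  X0 (iC j) (iA i) = - (X0 (iC i) (iA j))^*.
Proof.
move=> [hh _]; have := inh_entry hpq hh (iA j) (iA i).
rewrite sig_iA sig_iA !sgn_iA !mulr1 mul1r => /eqP; rewrite addr_eq0 => /eqP ->.
by rewrite opprK.
Qed.

Lemma rel_mi (i : 'I_p) (X : M) (b : 'I_N) : rootsp (fun t => - alpha i t) X -> (p <= b < q)%N ->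
  X (iC i) b = (X b (iA i))^*.
Proof.
move=> [hh _] hb; have := inh_entry hpq hh (iA i) b.
rewrite sig_iA sig_B // sgn_B // sgn_iA mul1r mulrN1 => /eqP; rewrite addrC subr_eq0 => /eqP ->.
by [].
Qed.

Lemma subE (A B : M) a b : (A - B) a b = A a b - B a b.
Proof. by rewrite !mxE. Qed.

Lemma part2core (i j : 'I_p) (X0 X : M) : rootsp (fun t => - alpha i t - alpha j t) X0 -> X0 != 0 ->
  rootsp (fun t => - alpha i t) X -> exists Y, rootsp (alpha j) Y /\ lie Y X0 = X.
Proof.
move=> hX0 nz0 hX.
set x := X0 (iC i) (iA j).
have hx : x != 0.
  have [a [b hab]] := mat_neq0 nz0.
  case/orP: (supp_mij hpq hX0 hab) => /andP[ha hb].
    by move: hab; rewrite (ordE (iC_lt i) ha) (ordE (iA_lt j) hb).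
  move: hab; rewrite (ordE (iC_lt j) ha) (ordE (iA_lt i) hb) -/(iC j) -/(iA i) (rel_mij hX0).
  by rewrite oppr_eq0 conjc_eq0.
have hxc : x^* != 0 by rewrite conjC_eq0.
pose Y : M := \matrix_(a < N, b < N)
  (if ((a == j :> nat) && (p <= b < q))%N then - (X b (iA i))^* / x
   else if ((p <= a < q) && (b == q + j :> nat))%N then - X a (iA i) / x^* else 0).
pose S := fun a b : 'I_N => (((a == j :> nat) && (p <= b < q)) || ((p <= a < q) && (b == q + j :> nat)))%N.
have SY : forall a b, Y a b != 0 -> S a b.
  move=> a b; rewrite /S mxE; case: ifP => [h _|_]; first lia.
  by case: ifP => [h _|_]; [lia|rewrite eqxx].
have hYh : in_h Y.
  apply: (@inh_check R p q hpq Y S SY).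
    move=> c a /orP[] /andP[h1 h2].
      rewrite (ordE (iA_lt j) h1) -/(iA j) sig_iA sgn_iA sig_B // sgn_B // !mxE eqxx h2 /=.
      have -> : (q + j < q)%N = false by lia.
      rewrite !andbF eqxx /= !(rmorphN, rmorphM, fmorphV) /= conjCK; field.
      by rewrite conjC_eq0.
    rewrite (ordE (iC_lt j) h2) -/(iC j) sig_iC sgn_iC sig_B // sgn_B // !mxE eqxx h1 /=.
    have -> : (q + j < q)%N = false by lia.
    rewrite !andbF eqxx /= !(rmorphN, rmorphM, fmorphV) /= conjCK; field.
    exact: hx.
  move=> a; have hj := ltn_ord j; rewrite mxE; case: ifP => [h|_]; first by exfalso; lia.
  by case: ifP => [h|_] //; exfalso; lia.
have hY : rootsp (alpha j) Y.
  apply: root_intro => // t a b /SY; rewrite /S => /orP[] /andP[h1 h2].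
    rewrite (dd_B _ h2) (eqP h1) dd_A //; rewrite /alpha; lra.
  rewrite (dd_B _ h1) (eqP h2) dd_C ?leq_addr // addKn /alpha; lra.
exists Y; split => //.
have P1 : forall a b, (Y *m X0) a b = Y a (iC j) * X0 (iC j) b.
  move=> a b; rewrite [LHS]mxE (sum1 (c0 := iC j)) // => c hc.
  have [->|h] := eqVneq (X0 c b) 0; first by rewrite mulr0.
  have hc' : (c != q + j :> nat) by apply: contra hc => /eqP e; apply/eqP/ord_inj.
  case/orP: (supp_mij hpq hX0 h) => /andP[h1 h2]; last by rewrite h1 in hc'.
  rewrite mxE; case: ifP => [?|_]; first by exfalso; lia.
  by case: ifP => [?|_]; [exfalso; lia|rewrite mul0r].
have P2 : forall a b, (X0 *m Y) a b = X0 a (iA j) * Y (iA j) b.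
  move=> a b; rewrite [LHS]mxE (sum1 (c0 := iA j)) // => c hc.
  have [->|h] := eqVneq (X0 a c) 0; first by rewrite mul0r.
  have hc' : (c != j :> nat) by apply: contra hc => /eqP e; apply/eqP/ord_inj.
  have hi := ltn_ord i.
  case/orP: (supp_mij hpq hX0 h) => /andP[h1 h2]; first by exfalso; lia.
  rewrite mxE; case: ifP => [?|_]; first by exfalso; lia.
  by case: ifP => [?|_]; [exfalso; lia|rewrite mulr0].
apply/matrixP => a b; rewrite /lie subE P1 P2.
have hi := ltn_ord i; have hj := ltn_ord j.
case: (boolP ((p <= a < q) && (b == i :> nat))%N) => [/andP[ha hb]|hn1].
  rewrite (ordE (iA_lt i) hb) -/(iA i) (rel_mij hX0) -/x.
  have -> : X0 a (iA j) = 0.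
    apply/eqP; apply: contraTT ha => /(supp_mij hpq hX0) /orP[] /andP[h1 _]; lia.
  rewrite mxE; have -> : (a == j :> nat) = false by lia.
  rewrite ha eqxx /=; field; exact: hxc.
case: (boolP ((a == q + i :> nat) && (p <= b < q))%N) => [/andP[ha hb]|hn2].
  rewrite (ordE (iC_lt i) ha) -/(iC i) (rel_mi hX hb) -/x.
  rewrite [Y (iC i) _]mxE [Y (iA j) _]mxE /= eqxx hb /=.
  have -> : (q + i == j :> nat) = false by lia.
  have -> : (p <= q + i < q)%N = false by lia.
  rewrite /= eqxx /= mul0r sub0r; field; exact: hx.
have -> : X a b = 0.
  apply/eqP; apply: contraNT hn1 => /(supp_mi hpq hX) /orP[] // h; by rewrite h in hn2.
have -> : Y a (iC j) * X0 (iC j) b = 0.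
  have [->|h1] := eqVneq (Y a (iC j)) 0; first by rewrite mul0r.
  have [->|h2] := eqVneq (X0 (iC j) b) 0; first by rewrite mulr0.
  exfalso; move: (SY _ _ h1) (supp_mij hpq hX0 h2) hn1; rewrite /S /=; lia.
have -> : X0 a (iA j) * Y (iA j) b = 0.
  have [->|h1] := eqVneq (X0 a (iA j)) 0; first by rewrite mul0r.
  have [->|h2] := eqVneq (Y (iA j) b) 0; first by rewrite mulr0.
  exfalso; move: (SY _ _ h2) (supp_mij hpq hX0 h1) hn2; rewrite /S /=; lia.
by rewrite subr0.
Qed.

Lemma part3core (i j : 'I_p) (X0 : M) : i != j -> rootsp (fun t => - alpha j t) X0 -> X0 != 0 ->
  exists X, rootsp (fun t => - alpha i t) X /\ lie X X0 (iC i) (iA j) != 0.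
Proof.
move=> nij hX0 nz0.
have hi := ltn_ord i; have hj := ltn_ord j.
have nij' : (i != j :> nat) by [].
have [k0 [hk0 hu]] : exists k0 : 'I_N, (p <= k0 < q)%N /\ X0 k0 (iA j) != 0.
  have [a [b hab]] := mat_neq0 nz0.
  case/orP: (supp_mi hpq hX0 hab) => /andP[ha hb].
    by exists a; split => //; move: hab; rewrite (ordE (iA_lt j) hb).
  exists b; split => //; move: hab; rewrite (ordE (iC_lt j) ha) -/(iC j) (rel_mi hX0 hb).
  by rewrite conjC_eq0.
set u := X0 k0 (iA j).
pose X : M := \matrix_(a < N, b < N)
  (if (a == k0) && (b == i :> nat) then u
   else if (a == q + i :> nat) && (b == k0) then u^* else 0).
pose S := fun a b : 'I_N => ((a == k0) && (b == i :> nat)) || ((a == q + i :> nat) && (b == k0)).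
have SX : forall a b, X a b != 0 -> S a b.
  move=> a b; rewrite /S mxE; case: ifP => [h _|_]; first by apply/orP; left.
  by case: ifP => [h _|_]; [apply/orP; right|rewrite eqxx].
have hXh : in_h X.
  apply: (@inh_check R p q hpq X S SX).
    move=> c a /orP[] /andP[h1 h2].
      rewrite (eqP h1) (ordE (iA_lt i) h2) -/(iA i) sig_iA sgn_iA sig_B // sgn_B // !mxE !eqxx /=.
      have -> : (k0 == i :> nat) = false by lia.
      rewrite andbF /=; ring.
    rewrite (ordE (iC_lt i) h1) -/(iC i) (eqP h2) sig_iC sgn_iC sig_B // sgn_B // !mxE !eqxx /=.
    have -> : (k0 == i :> nat) = false by lia.
    rewrite andbF /= conjCK; ring.
  move=> a; rewrite mxE; case: ifP => [/andP[/eqP -> h]|_]; first by exfalso; lia.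
  by case: ifP => [/andP[h /eqP e]|_] //; exfalso; rewrite e in h; lia.
have hX : rootsp (fun t => - alpha i t) X.
  apply: root_intro => // t a b /SX; rewrite /S => /orP[] /andP[/eqP h1 h2].
    by rewrite h1 (dd_B _ hk0) (eqP h2) dd_A // /alpha; lra.
  by rewrite (eqP h2) (dd_B _ hk0) h1 dd_C ?leq_addr // addKn /alpha; lra.
exists X; split => //.
rewrite /lie subE.
have -> : (X0 *m X) (iC i) (iA j) = 0.
  rewrite mxE big1 // => c _.
  have [->|h] := eqVneq (X0 (iC i) c) 0; first by rewrite mul0r.
  by exfalso; move: (supp_mi hpq hX0 h) => /=; lia.
have hCk : (iC i == k0) = false.
  by apply/negbTE; apply/eqP => e; rewrite -e /= in hk0; lia.
rewrite subr0 mxE (sum1 (c0 := k0)); last first.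
  move=> c hc; rewrite mxE /= eqxx /= hCk /= (negbTE hc) mul0r //.
rewrite mxE /= !eqxx /= hCk /=.
by rewrite mulf_neq0 // conjC_eq0.
Qed.

End Work3.

End Helpers.
Import Helpers.

Theorem mainTheorem6 (R : realType) (p q : nat)
    (h0 : 'M[complex R]_(Nsz p q) -> Prop) :
  (0 < p)%N -> (p < q)%N ->
  is_subalg h0 -> adb_invariant h0 ->
  ((forall X, in_aH X -> h0 X) -> forall X, in_bH X -> h0 X) /\
  (forall i j : 'I_p,
     (exists X, rootsp (fun t => - alpha i t - alpha j t) X /\ X <> 0 /\ h0 X) ->
     forall X, rootsp (fun t => - alpha i t) X -> h0 X) /\
  ((2 <= p)%N -> forall i j : 'I_p, i <> j ->
     (forall X, rootsp (fun t => - alpha i t) X -> h0 X) ->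
     (exists X, rootsp (fun t => - alpha j t) X /\ X <> 0 /\ h0 X) ->
     forall X, rootsp (fun t => - alpha j t) X -> h0 X).
Proof.
move=> hp hpq hs hadb.
have P2 : forall i j : 'I_p,
    (exists X, rootsp (fun t => - alpha i t - alpha j t) X /\ X <> 0 /\ h0 X) ->
    forall X, rootsp (fun t => - alpha i t) X -> h0 X.
  move=> i j [X0 [hX0 [nz h0X0]]] X hX.
  have [Y [hY <-]] := part2core hpq hX0 (introN eqP nz) hX.
  exact: hadb _ _ (in_bH_alpha hY) h0X0.
split; first exact: (part1 hs hadb).
split => // _ i j hij hall [X0 [hX0 [nz h0X0]]].
have [X [hX hne]] := part3core hpq (i:=i) (introN eqP hij) hX0 (introN eqP nz).
have hXh0 := hall X hX.
have := hs; rewrite /is_subalg => -[hin [_ [_ [_ hlie]]]].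
have hZ := hlie _ _ hXh0 h0X0.
apply: (P2 j i); exists (lie X X0); split; last split => //.
  apply: (root_lie hX hX0 (hin _ hZ)) => t; rewrite /alpha; lra.
by move=> E; rewrite E mxE eqxx in hne.
Qed.
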